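(* Let $\lambda>0$ and $\delta\in(0,1)$, and let $\mathsf{T}$ be a fixed plane tree with $i\ge 1$ vertices. For each sufficiently large $k$, let $\ell=\lceil\lambda k\rceil$ and $d=\lceil\delta\lambda k\rceil$. Choose uniformly at random a plane tree with $\ell$ vertices whose root has degree $d$. Let $\beta_k(\mathsf{T})$ be the number of its principal subtrees that are isomorphic to $\mathsf{T}$, divided by $d$. Then $\beta_k(\mathsf{T})$ is concentrated at $$\mu_\beta(\mathsf{T})=\frac{(1-\delta)^{i-1}}{(2-\delta)^{2i-1}}.$$
   Context: A plane tree is a rooted tree in which the children of each vertex are linearly ordered. The principal subtrees of a rooted tree are the subtrees rooted at the children of the root; isomorphism is isomorphism of plane trees. A sequence of random variables $(\xi_k)$ is concentrated at a constant $\mu$ if for every $\varepsilon>0$ there is $K$ such that $\mathbb{P}[|\xi_k-\mu|\le\varepsilon]>1-\varepsilon$ for all $k\ge K$. *)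

(* Defs.v *)
From HB Require Import structures.
From mathcomp Require Import all_boot.
From Stdlib Require Import Reals.

Set Implicit Arguments.
Unset Strict Implicit.
Unset Printing Implicit Defensive.

(* Plane trees: a vertex with a linearly ordered list of children.
   Isomorphism of plane trees is equality of this representation. *)
Inductive ptree : Type := Node of seq ptree.

Definition children (t : ptree) : seq ptree := let: Node ts := t in ts.

Definition root_deg (t : ptree) : nat := size (children t).

Fixpoint nverts (t : ptree) : nat :=
  let: Node ts := t in (sumn (map nverts ts)).+1.

Definition ptree_ind' (P : ptree -> Prop)
  (H : forall ts, (forall t, List.In t ts -> P t) -> P (Node ts)) :
  forall t, P t :=
  fix f t := match t with
  | Node ts => H ts
      ((fix g (ts : seq ptree) : forall t, List.In t ts -> P t :=
          match ts with
          | nil => fun _ Hin => False_ind _ Hin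
          | cons x xs => fun t Hin =>
              match Hin with
              | or_introl e => eq_ind x P (f x) t e
              | or_intror h => g xs t h
              end
          end) ts)
  end.

Fixpoint ptree_enc (t : ptree) : GenTree.tree unit :=
  let: Node ts := t in GenTree.Node 0 (map ptree_enc ts).

Fixpoint ptree_dec (g : GenTree.tree unit) : ptree :=
  match g with
  | GenTree.Leaf _ => Node [::]
  | GenTree.Node _ gs => Node (map ptree_dec gs)
  end.

Lemma ptree_encK : cancel ptree_enc ptree_dec.
Proof.
elim/ptree_ind' => ts IH /=; congr Node.
elim: ts IH => [|x xs IHxs] IH //=.
rewrite IH; last by left.
by rewrite IHxs // => t Ht; apply: IH; right.
Qed.

HB.instance Definition _ := Countable.copy ptree (can_type ptree_encK).

Definition Rceil (x : R) : Z := (- Int_part (- x))%Z.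

Definition Rleb (x y : R) : bool := if Rle_dec x y then true else false.

Definition ell_of (lambda : R) (k : nat) : nat :=
  Z.to_nat (Rceil (lambda * INR k)).
Definition deg_of (lambda delta : R) (k : nat) : nat :=
  Z.to_nat (Rceil (delta * lambda * INR k)).

Definition beta (d : nat) (T t : ptree) : R :=
  INR (count (pred1 T) (children t)) / INR d.

Definition mu_beta (delta : R) (i : nat) : R :=
  ((1 - delta) ^ (i - 1)) / ((2 - delta) ^ (2 * i - 1)).

(* Main.v *)
Require Import Defs.
From HB Require Import structures.
From mathcomp Require Import all_boot zify.
From Stdlib Require Import Lia.

Set Implicit Arguments.
Unset Strict Implicit.
Unset Printing Implicit Defensive.

Definition tsum (f : seq ptree) : nat := sumn (map nverts f).

Fixpoint E (n d : nat) {struct n} : seq (seq ptree) :=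
  match n, d with
  | 0, 0 => [:: [::]]
  | 0, _.+1 => [::]
  | _.+1, 0 => [::]
  | n'.+1, d'.+1 =>
      flatten [seq [seq Node (take m g) :: drop m g | g <- E n' (d' + m)]
              | m <- iota 0 n'.+1]
  end.

Lemma E_S n d : E n.+1 d.+1 =
  flatten [seq [seq Node (take m g) :: drop m g | g <- E n (d + m)]
              | m <- iota 0 n.+1].
Proof. by []. Qed.

Lemma nverts_gt0 t : 0 < nverts t.
Proof. by case: t. Qed.

Lemma size_le_tsum f : size f <= tsum f.
Proof.
elim: f => //= t f IH; rewrite /tsum /= -/(tsum f).
by rewrite -add1n leq_add // nverts_gt0.
Qed.

Lemma tsum_cat f g : tsum (f ++ g) = tsum f + tsum g.
Proof. by rewrite /tsum map_cat sumn_cat. Qed.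

Lemma tsum_cons t f : tsum (t :: f) = nverts t + tsum f.
Proof. by []. Qed.

Lemma memE n d f : (f \in E n d) = (size f == d) && (tsum f == n).
Proof.
elim: n d f => [|n IH] [|d] f.
- by rewrite /= inE; case: f => [|t f].
- rewrite /= in_nil; case: (size f =P d.+1) => //= Hs.
  apply/esym/negbTE; rewrite -lt0n; apply: leq_trans (size_le_tsum f).
  by rewrite Hs.
- by rewrite /= in_nil; case: f => [|t f].
- rewrite E_S; apply/idP/idP.
  + move=> /flatten_mapP [m Hm] /mapP [g].
    rewrite IH => /andP [/eqP Hsg /eqP Htg] ->.
    have Hmg : m <= size g by rewrite Hsg leq_addl.
    rewrite /= size_drop Hsg addnK eqxx /=.
    rewrite tsum_cons /= -/(tsum (take m g)).
    by rewrite addSn -tsum_cat cat_take_drop Htg.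
  + case: f => [|[c] r] // /andP [/eqP [Hs] /eqP Ht].
    have Hc : tsum c + tsum r = n.
      by move: Ht; rewrite tsum_cons /= -/(tsum c) addSn => -[].
    apply/flatten_mapP; exists (size c).
    * rewrite mem_iota add0n ltnS.
      by apply: leq_trans (size_le_tsum c) _; rewrite -Hc leq_addr.
    * apply/mapP; exists (c ++ r).
      - by rewrite IH size_cat Hs addnC eqxx tsum_cat Hc eqxx.
      - by rewrite take_size_cat // drop_size_cat.
Qed.

Lemma uniq_flat (S T : eqType) (h : S -> seq T) (key : T -> S) (ms : seq S) :
  uniq ms -> (forall m, uniq (h m)) -> (forall m x, x \in h m -> key x = m) ->
  uniq (flatten (map h ms)).
Proof.
move=> Hms Hh Hk; elim: ms Hms => //= m ms IH /andP [Hm Hms].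
rewrite cat_uniq Hh IH // andbT /=.
apply/hasPn => x Hx; apply/negP => Hx2.
have [m' Hm' Hx'] : exists2 m', m' \in ms & x \in h m' by apply/flatten_mapP.
by move: Hm; rewrite -(Hk _ _ Hx2) (Hk _ _ Hx') Hm'.
Qed.

Definition key (f : seq ptree) : nat :=
  if f is Node c :: _ then size c else 0.

Lemma uniqE n d : uniq (E n d).
Proof.
elim: n d => [|n IH] [|d] //.
rewrite E_S; apply: (uniq_flat (key := key)); first exact: iota_uniq.
- move=> m; rewrite map_inj_in_uniq // => g1 g2.
  rewrite !memE => /andP [/eqP H1 _] /andP [/eqP H2 _] [E1 E2].
  by rewrite -(cat_take_drop m g1) -(cat_take_drop m g2) E1 E2.
- move=> m x /mapP [g]; rewrite memE => /andP [/eqP Hg _] -> /=.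
  by rewrite size_take Hg ltn_neqAle leq_addl andbT; case: eqP => // ->.
Qed.

Definition F n d := size (E n d).

Lemma F_big n d : F n d = 0 -> True. Proof. by []. Qed.

Lemma E_nil n d : n < d -> E n d = [::].
Proof.
move=> Hnd; case Hx: (E n d) => [|x xs] //.
have : x \in E n d by rewrite Hx mem_head.
rewrite memE => /andP [/eqP Hs /eqP Ht].
by move: (size_le_tsum x); rewrite Hs Ht leqNgt Hnd.
Qed.

Lemma F_nil n d : n < d -> F n d = 0.
Proof. by move=> H; rewrite /F E_nil. Qed.

Lemma sumn_iota (f : nat -> nat) k :
  sumn [seq f m | m <- iota 0 k] = \sum_(m < k) f m.
Proof.
elim: k => [|k IH]; first by rewrite big_ord0.
have -> : iota 0 k.+1 = rcons (iota 0 k) k by rewrite -cats1 -addn1 iotaD.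
by rewrite big_ord_recr -IH /= -sumn_rcons -map_rcons.
Qed.

Lemma F_S n d : F n.+1 d.+1 = \sum_(m < n.+1) F n (d + m).
Proof.
rewrite -(sumn_iota (fun m => F n (d + m))) /F E_S size_flatten /shape -map_comp.
by congr sumn; apply: eq_map => m /=; rewrite size_map.
Qed.

Lemma F_rec n d : F n.+1 d.+1 = F n d + F n.+1 d.+2.
Proof.
rewrite !F_S big_ord_recl /= addn0; congr (_ + _).
rewrite big_ord_recr /= F_nil ?addn0; last by lia.
by apply: eq_bigr => m _; rewrite /bump /= add1n addSn addnS.
Qed.

Lemma F_n0 n : F n.+1 0 = 0. Proof. by []. Qed.

Lemma closed_aux n d : d <= n.+1 ->
  F n.+1 d * (n.+1`! * (n.+1 - d)`!) = d * (2 * n.+1 - d - 1)`!.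
Proof.
elim: n d => [|n IH] d.
  by case: d => [|[|d]] //.
move=> Hd.
have [j Hj] : exists j, n.+2 - d = j by eexists.
elim: j d Hj Hd => [|j IHj] d Hj Hd.
  have -> : d = n.+2 by lia.
  have H1 := IH n.+1 (leqnn _).
  rewrite subnn fact0 muln1 in H1.
  rewrite (_ : 2 * n.+1 - n.+1 - 1 = n) in H1; last by lia.
  have HF : F n.+1 n.+1 = 1.
    rewrite factS in H1.
    have Hp := fact_gt0 n.
    apply/eqP; rewrite -(eqn_pmul2r (_ : 0 < n.+1 * n`!)); last by rewrite muln_gt0.
    by rewrite H1 mul1n.
  rewrite F_rec (F_nil (n:=n.+2) (d:=n.+3)) // addn0 HF subnn fact0 muln1 mul1n.
  by have -> : 2 * n.+2 - n.+2 - 1 = n.+1 by lia.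
case: d Hj Hd => [|e] Hj Hd; first by rewrite F_n0.
rewrite F_rec.
have He : e <= n.+1 by lia.
have H1 := IH e He.
have H2 := IHj e.+2 ltac:(lia) ltac:(lia).
have [M HM] : exists M, n = e + M by exists (n - e); lia.
subst n.
rewrite (_ : (e + M).+1 - e = M.+1) in H1; last by lia.
rewrite (_ : 2 * (e + M).+1 - e - 1 = e + 2 * M + 1) in H1; last by lia.
rewrite (_ : (e + M).+2 - e.+2 = M) in H2; last by lia.
rewrite (_ : 2 * (e + M).+2 - e.+2 - 1 = e + 2 * M + 1) in H2; last by lia.
rewrite (_ : (e + M).+2 - e.+1 = M.+1); last by lia.
rewrite (_ : 2 * (e + M).+2 - e.+1 - 1 = (e + 2 * M + 1).+1); last by lia.
move: H1 H2; rewrite !factS.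
set x := F _ e; set y := F _ e.+2.
set A := (e + 2 * M + 1)`!; set B := (e + M)`!; set C := M`!.
move=> H1 H2.
have -> : (x + y) * ((e + M).+2 * ((e + M).+1 * B) * (M.+1 * C))
  = (e + M).+2 * (x * ((e + M).+1 * B * (M.+1 * C)))
    + M.+1 * (y * ((e + M).+2 * ((e + M).+1 * B) * C)) by nia.
rewrite H1 H2; nia.
Qed.

Lemma F_closed n d : 0 < n -> d <= n ->
  F n d * (n`! * (n - d)`!) = d * (2 * n - d - 1)`!.
Proof. by case: n => // n _; apply: closed_aux. Qed.

Definition x0 := Node [::].
Definition ins j (T : ptree) (f : seq ptree) := take j f ++ T :: drop j f.

Lemma ins_cat a b T : ins (size a) T (a ++ b) = a ++ T :: b.
Proof. by rewrite /ins take_size_cat // drop_size_cat. Qed.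

Definition del j (g : seq ptree) := take j g ++ drop j.+1 g.

Lemma del_cat a b (T : ptree) : del (size a) (a ++ T :: b) = a ++ b.
Proof.
elim: a => [|x a IH]; first by rewrite /del /= drop0.
by rewrite /del /= -/(del _ _) IH.
Qed.

Lemma insK T j f : j <= size f -> del j (ins j T f) = f.
Proof.
move=> Hj; have Hs : size (take j f) = j by rewrite size_takel.
by rewrite /ins -{1}Hs del_cat cat_take_drop.
Qed.

Lemma split_nth (g : seq ptree) j : j < size g ->
  g = take j g ++ nth x0 g j :: drop j.+1 g.
Proof. by move=> Hj; rewrite -drop_nth // cat_take_drop. Qed.

Lemma filter_perm n d j T : j < d -> nverts T <= n ->
  perm_eq [seq g <- E n d | nth x0 g j == T]
          [seq ins j T f | f <- E (n - nverts T) d.-1].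
Proof.
move=> Hj HT; apply: uniq_perm.
- by apply: filter_uniq; apply: uniqE.
- rewrite map_inj_in_uniq; first exact: uniqE.
  move=> f1 f2; rewrite !memE => /andP [/eqP H1 _] /andP [/eqP H2 _].
  move=> Heq; rewrite -(insK T (_ : j <= size f1)) ?H1; last by lia.
  by rewrite Heq insK // H2; lia.
- move=> g; rewrite mem_filter; apply/idP/idP.
  + case/andP => /eqP Hg; rewrite memE => /andP [/eqP Hs /eqP Ht].
    have Hjg : j < size g by rewrite Hs.
    have Hsp := split_nth Hjg.
    have Hst : size (take j g) = j by rewrite size_take Hjg.
    apply/mapP; exists (take j g ++ drop j.+1 g).
      rewrite memE size_cat size_take Hjg size_drop Hs.
      rewrite (_ : j + (d - j.+1) = d.-1); last by lia.
      rewrite eqxx /=.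
      move: Ht; rewrite {1}Hsp tsum_cat tsum_cons tsum_cat Hg => <-.
      by apply/eqP; lia.
    by rewrite -{1}Hst ins_cat -Hg.
  + case/mapP => f; rewrite memE => /andP [/eqP Hs /eqP Ht] ->.
    have Hst : size (take j f) = j by rewrite size_takel // Hs; lia.
    have Hsz : size (take j f) + size (drop j f) = d.-1
      by rewrite -size_cat cat_take_drop.
    have Hts : tsum (take j f) + tsum (drop j f) = n - nverts T
      by rewrite -tsum_cat cat_take_drop.
    move: Hst Hsz Hts; rewrite /ins.
    move: (take j f) (drop j f) => a b Hst Hsz Hts.
    rewrite nth_cat Hst ltnn subnn /= eqxx /= memE.
    rewrite size_cat /= tsum_cat tsum_cons.
    rewrite -subn1 in Hsz.
    set sa := size a in Hst Hsz *; set sb := size b in Hsz *.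
    by apply/andP; split; apply/eqP; lia.
Qed.

Lemma count_ins n d j T (Q : pred (seq ptree)) : j < d -> nverts T <= n ->
  count (fun g => (nth x0 g j == T) && Q g) (E n d) =
  count (fun f => Q (ins j T f)) (E (n - nverts T) d.-1).
Proof.
move=> Hj HT.
rewrite (eq_count (a2 := predI Q (fun g => nth x0 g j == T))); last first.
  by move=> g /=; rewrite andbC.
by rewrite -count_filter (permP (filter_perm Hj HT)) count_map.
Qed.

Lemma count_pos n d j T : j < d -> nverts T <= n ->
  count (fun g => nth x0 g j == T) (E n d) = F (n - nverts T) d.-1.
Proof.
move=> Hj HT; rewrite /F -count_predT.
rewrite -(count_ins predT Hj HT).
by apply: eq_count => g; rewrite /= andbT.
Qed.

Lemma sum_bool (T0 : Type) (P : pred T0) s : \sum_(x <- s) (P x : nat) = count P s.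
Proof. by elim: s => [|x s IH]; rewrite ?big_nil ?big_cons ?IH. Qed.

Definition X (T : ptree) (g : seq ptree) := count (pred1 T) g.

Lemma X_sum T g : X T g = \sum_(j < size g) (nth x0 g j == T).
Proof.
rewrite /X; elim: g => [|x g IH]; first by rewrite big_ord0.
by rewrite big_ord_recl /= IH eq_sym.
Qed.

Lemma nth_ins j T f j' : j <= size f -> j' != j ->
  nth x0 (ins j T f) j' = nth x0 f (if j' < j then j' else j'.-1).
Proof.
move=> Hj Hne; rewrite /ins nth_cat size_takel //.
case: ltnP => H; first by rewrite nth_take.
have H2 : j < j' by rewrite ltn_neqAle eq_sym Hne.
rewrite (_ : j' - j = (j' - j).-1.+1); last by lia.
by rewrite /= nth_drop; congr nth; lia.
Qed.

Lemma S1 n d T : 0 < d -> nverts T <= n ->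
  \sum_(g <- E n d) X T g = d * F (n - nverts T) d.-1.
Proof.
move=> Hd HT.
rewrite (@eq_big_seq _ _ _ _ _ _ (fun g => \sum_(j < d) (nth x0 g j == T))); last first.
  by move=> g; rewrite memE X_sum => /andP [/eqP -> _].
rewrite exchange_big /=.
rewrite (eq_bigr (fun _ => F (n - nverts T) d.-1)); last first.
  by move=> j _; rewrite sum_bool count_pos.
by rewrite sum_nat_const card_ord.
Qed.

Lemma S2 n d T : 1 < d -> 2 * nverts T <= n ->
  \sum_(g <- E n d) X T g * X T g =
  d * F (n - nverts T) d.-1 + d * (d.-1 * F (n - nverts T - nverts T) d.-2).
Proof.
move=> Hd HT.
rewrite (@eq_big_seq _ _ _ _ _ _ (fun g => \sum_(j < d) \sum_(j' < d)
           ((nth x0 g j == T) && (nth x0 g j' == T) : nat))); last first.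
  move=> g; rewrite memE X_sum => /andP [/eqP -> _].
  rewrite big_distrl /=; apply: eq_bigr => j _.
  rewrite big_distrr /=; apply: eq_bigr => j' _.
  by rewrite mulnb.
rewrite exchange_big /=.
set F1 := F (n - nverts T) d.-1; set F2 := F (n - nverts T - nverts T) d.-2.
have Hc : forall j : 'I_d, \sum_(j' < d | j' != j) F2 = d.-1 * F2.
  move=> j; have H : \sum_(i < d) F2 = F2 + \sum_(i < d | i != j) F2
    by rewrite (bigD1 j).
  rewrite big_const_ord iter_addn_0 in H.
  rewrite -subn1 mulnBl mul1n mulnC H; lia.
rewrite (eq_bigr (fun j => F1 + d.-1 * F2)); last first.
  move=> j _; rewrite exchange_big /= (bigD1 j) //=.
  rewrite sum_bool (eq_count (a2 := fun g => nth x0 g j == T)); last first.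
    by move=> g; rewrite /= andbb.
  rewrite count_pos //; last by lia.
  congr (_ + _); rewrite -(Hc j); apply: eq_bigr => j' Hj'.
  rewrite sum_bool count_ins //; last by lia.
  rewrite (@eq_in_count _ _ (fun f => nth x0 f (if j' < j then (j' : nat) else (j' : nat).-1) == T)); last first.
    move=> f; rewrite memE => /andP [/eqP Hs _].
    by rewrite nth_ins // Hs; have := ltn_ord j; lia.
  rewrite count_pos //; last by lia.
  have := ltn_ord j; have := ltn_ord j'; move/eqP: Hj' => Hne.
  have Hne' : (j' : nat) <> j by move=> /val_inj.
  move=> H1 H2; rewrite -!subn1; case: (ltnP j' j) => H3; lia.
by rewrite sum_nat_const card_ord mulnDr.
Qed.

Lemma F_ratio n d a b : b <= a -> b <= d -> a < n -> d <= n -> a - b <= n - d ->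
  2 * a - b <= 2 * n - d - 1 ->
  F n d * (n ^_ a) * ((n - d) ^_ (a - b)) * (d - b) =
  d * ((2 * n - d - 1) ^_ (2 * a - b)) * F (n - a) (d - b).
Proof.
move=> Hba Hbd Han Hdn Hnd H2.
have H := F_closed (n := n) (d := d) ltac:(lia) ltac:(lia).
have H' := F_closed (n := n - a) (d := d - b) ltac:(lia) ltac:(lia).
rewrite -(ffact_fact (ltnW Han)) -(ffact_fact Hnd) -(ffact_fact H2) in H.
rewrite (_ : n - d - (a - b) = n - a - (d - b)) in H; last by lia.
rewrite (_ : 2 * n - d - 1 - (2 * a - b) = 2 * (n - a) - (d - b) - 1) in H;
  last by lia.
move: H H'.
set P1 := (n - a)`!; set P2 := (n - a - (d - b))`!; set A := (_ - _ - 1)`!.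
set f1 := n ^_ a; set f2 := (n - d) ^_ (a - b); set f3 := _ ^_ (2 * a - b).
set x := F n d; set y := F (n - a) (d - b); set d' := d - b.
move=> H H'.
have HP : 0 < P1 * P2 by rewrite muln_gt0 !fact_gt0.
apply/eqP; rewrite -(eqn_pmul2r HP); apply/eqP.
have -> : x * f1 * f2 * d' * (P1 * P2) = (x * (f1 * P1 * (f2 * P2))) * d' by nia.
have -> : d * f3 * y * (P1 * P2) = d * f3 * (y * (P1 * P2)) by nia.
by rewrite H H'; nia.
Qed.

Lemma F_pos n d : 0 < d -> d <= n -> 0 < F n d.
Proof.
move=> Hd Hn; have H := F_closed (n := n) (d := d) ltac:(lia) Hn.
have : 0 < d * (2 * n - d - 1)`! by rewrite muln_gt0 Hd fact_gt0.
by rewrite -H muln_gt0 => /andP [].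
Qed.

Lemma perm_s n d (s : seq ptree) : uniq s ->
  (forall t, (t \in s) = (nverts t == n.+1) && (root_deg t == d)) ->
  perm_eq s (map Node (E n d)).
Proof.
move=> Hu Hm; have Hinj : injective Node by move=> f1 f2 [].
apply: uniq_perm => //; first by rewrite map_inj_uniq // uniqE.
move=> [f]; rewrite Hm mem_map // memE /= eqSS /root_deg /=.
by rewrite andbC.
Qed.

Lemma transfer n d (s : seq ptree) (h : seq ptree -> nat) : uniq s ->
  (forall t, (t \in s) = (nverts t == n.+1) && (root_deg t == d)) ->
  sumn (map (fun t => h (children t)) s) = \sum_(g <- E n d) h g /\ size s = F n d.
Proof.
move=> Hu Hm; have Hp := perm_s Hu Hm; split.
  by rewrite (perm_sumn (perm_map _ Hp)) -map_comp sumnE big_map.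
by rewrite (perm_size Hp) size_map.
Qed.

Unset Implicit Arguments.
Set Strict Implicit.
From Stdlib Require Import Reals Lra ZArith.
From Coquelicot Require Import Coquelicot.
Open Scope R_scope.


Definition approx (u : nat -> nat) (c : R) :=
  exists B : R, exists K : nat, forall k : nat, (K <= k)%nat ->
    Rabs (INR (u k) - c * INR k) <= B.

Lemma lim_invn : is_lim_seq (fun k => / INR k) 0.
Proof.
have H := is_lim_seq_inv _ _ is_lim_seq_INR ltac:(discriminate).
exact: H.
Qed.

Lemma lim_approx u c : approx u c -> is_lim_seq (fun k => INR (u k) / INR k) c.
Proof.
move=> [B [K HB]].
apply: (is_lim_seq_le_le_loc (fun k => c - B * / INR k) _ (fun k => c + B * / INR k)).
- exists (K.+1) => k Hk.
  have Hk0 : 0 < INR k by apply: lt_0_INR; lia.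
  have := HB k ltac:(lia); move/Rabs_le_between => [H1 H2].
  split.
  + apply: (Rmult_le_reg_r (INR k)) => //.
    rewrite /Rdiv Rmult_assoc Rinv_l; last lra.
    rewrite Rmult_minus_distr_r Rmult_assoc Rinv_l; lra.
  + apply: (Rmult_le_reg_r (INR k)) => //.
    rewrite /Rdiv Rmult_assoc Rinv_l; last lra.
    rewrite Rmult_plus_distr_r Rmult_assoc Rinv_l; lra.
- have := is_lim_seq_minus' _ _ _ _ (is_lim_seq_const c)
           (is_lim_seq_scal_l _ B _ lim_invn).
  by rewrite /= Rmult_0_r Rminus_0_r.
- have := is_lim_seq_plus' _ _ _ _ (is_lim_seq_const c)
           (is_lim_seq_scal_l _ B _ lim_invn).
  by rewrite /= Rmult_0_r Rplus_0_r.
Qed.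

Lemma INR_Z2N z : (0 <= z)%Z -> INR (Z.to_nat z) = IZR z.
Proof. by move=> Hz; rewrite INR_IZR_INZ Z2Nat.id. Qed.

Lemma nat_gt x : exists K : nat, x < INR K.
Proof.
have [H1 _] := archimed x.
case: (Z_lt_le_dec (up x) 0) => Hz.
  exists 0%nat; have := IZR_lt _ _ Hz; rewrite /= => ?; lra.
by exists (Z.to_nat (up x)); rewrite INR_Z2N.
Qed.

Lemma INR_subn a b : INR (a - b)%nat = if (b <= a)%nat then INR a - INR b else 0.
Proof.
case: leqP => H.
  by rewrite minus_INR //; apply/leP.
by rewrite (_ : (a - b)%nat = 0%nat) //; lia.
Qed.

Lemma approx_subc u c m : approx u c -> approx (fun k => u k - m)%nat c.
Proof.
move=> [B [K HB]]; exists (B + INR m), K => k Hk.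
have := HB k Hk; move/Rabs_le_between => [H1 H2].
have H0 := pos_INR (u k); have Hm := pos_INR m.
rewrite INR_subn; case: leqP => H; apply: Rabs_le; first lra.
have Hl : INR (u k) < INR m by apply: lt_INR; apply/ltP.
lra.
Qed.

Lemma approx_mul2 u c : approx u c -> approx (fun k => 2 * u k)%nat (2 * c).
Proof.
move=> [B [K HB]]; exists (2 * B), K => k Hk.
rewrite mult_INR /= (_ : (1 + 1) * INR (u k) - 2 * c * INR k
  = 2 * (INR (u k) - c * INR k)); last ring.
rewrite Rabs_mult Rabs_pos_eq; last lra.
have := HB k Hk; lra.
Qed.

Lemma approx_large u c : approx u c -> 0 < c -> forall M : nat,
  exists K : nat, forall k, (K <= k)%nat -> (M <= u k)%nat.
Proof.
move=> [B [K HB]] Hc M.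
have [K2 HK2] := nat_gt ((B + INR M) / c).
exists (maxn K K2) => k Hk.
have := HB k ltac:(lia); move/Rabs_le_between => [H1 H2].
have Hk2 : INR K2 <= INR k by apply: le_INR; lia.
have : INR M <= INR (u k).
  have : (B + INR M) / c * c < INR k * c by apply: Rmult_lt_compat_r; lra.
  rewrite /Rdiv Rmult_assoc Rinv_l; lra.
by move/INR_le/leP.
Qed.

Lemma approx_subn u v c1 c2 : approx u c1 -> approx v c2 -> c2 < c1 ->
  approx (fun k => u k - v k)%nat (c1 - c2).
Proof.
move=> [B1 [K1 H1]] [B2 [K2 H2]] Hc.
have [K3 HK3] := nat_gt ((B1 + B2) / (c1 - c2)).
exists (B1 + B2), (maxn K1 (maxn K2 K3)) => k Hk.
have := H1 k ltac:(lia); move/Rabs_le_between => [H11 H12].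
have := H2 k ltac:(lia); move/Rabs_le_between => [H21 H22].
have Hk3 : INR K3 <= INR k by apply: le_INR; lia.
have Hbig : B1 + B2 < (c1 - c2) * INR k.
  have : (B1 + B2) / (c1 - c2) * (c1 - c2) < INR k * (c1 - c2)
    by apply: Rmult_lt_compat_r; lra.
  rewrite /Rdiv Rmult_assoc Rinv_l; lra.
have Hle : (v k <= u k)%nat.
  apply/leP; apply: INR_le; lra.
rewrite INR_subn Hle; apply: Rabs_le; lra.
Qed.

Lemma approx_ceil c : 0 <= c -> approx (fun k => Z.to_nat (Rceil (c * INR k))) c.
Proof.
move=> Hc; exists 1, 0%nat => k _.
have Hk := pos_INR k.
have [H1 H2] := archimed (- (c * INR k)).
have Hx : 0 <= c * INR k by apply: Rmult_le_pos.
have HR : IZR (Rceil (c * INR k)) = 1 - IZR (up (- (c * INR k))).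
  rewrite /Rceil /Int_part opp_IZR minus_IZR; ring.
have Hz : (0 <= Rceil (c * INR k))%Z.
  apply: le_IZR; rewrite HR; lra.
rewrite INR_Z2N // HR; apply: Rabs_le; lra.
Qed.

Lemma ff_lim u c m : approx u c ->
  is_lim_seq (fun k => INR (u k ^_ m) / INR k ^ m) (c ^ m).
Proof.
move=> Ha; elim: m => [|m IH].
  apply: (is_lim_seq_ext (fun _ => 1)); last exact: is_lim_seq_const.
  by move=> k; rewrite ffactn0 /= /Rdiv Rinv_1 Rmult_1_r.
have H2 := lim_approx _ _ (approx_subc _ _ m Ha).
have H3 := is_lim_seq_mult' _ _ _ _ IH H2.
rewrite (_ : c ^ m.+1 = c ^ m * c); last by rewrite /= Rmult_comm.
apply: is_lim_seq_ext H3 => k.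
rewrite ffactnSr mult_INR /= /Rdiv Rinv_mult; ring.
Qed.

Lemma ratio_lim (n d : nat -> nat) (c e : R) a b :
  approx n c -> approx d e -> 0 < e -> e < c -> (b <= a)%nat ->
  is_lim_seq (fun k => INR (F (n k - a) (d k - b)) / INR (F (n k) (d k)))
    (c ^ a * (c - e) ^ (a - b) * e / (e * (2 * c - e) ^ (2 * a - b))).
Proof.
move=> Hn Hd He Hec Hba.
have Hnd := approx_subn _ _ _ _ Hn Hd Hec.
have H2 := approx_subc _ _ 1 (approx_subn _ _ _ _ (approx_mul2 _ _ Hn) Hd ltac:(lra)).
have [K1 HK1] := approx_large _ _ Hd He b.+1.
have [K2 HK2] := approx_large _ _ Hnd ltac:(lra) (2 * a).+1.
apply: (is_lim_seq_ext_loc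
  (fun k => (INR (n k ^_ a) / INR k ^ a * (INR ((n k - d k) ^_ (a - b)) / INR k ^ (a - b))
             * (INR (d k - b) / INR k))
            / (INR (d k) / INR k * (INR ((2 * n k - d k - 1) ^_ (2 * a - b)) / INR k ^ (2 * a - b))))).
- exists (maxn 1 (maxn K1 K2)) => k Hk.
  have Hdk := HK1 k ltac:(lia); have Hndk := HK2 k ltac:(lia).
  have Heq := F_ratio (n := n k) (d := d k) (a := a) (b := b) Hba
    ltac:(lia) ltac:(lia) ltac:(lia) ltac:(lia) ltac:(lia).
  have /(congr1 INR) := Heq; rewrite !mult_INR => HeqR.
  have HF : 0 < INR (F (n k) (d k)) by apply: lt_0_INR; apply/ltP; apply: F_pos; lia.
  have Hd0 : 0 < INR (d k) by apply: lt_0_INR; lia.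
  have Hf3 : 0 < INR ((2 * n k - d k - 1) ^_ (2 * a - b)).
    by apply: lt_0_INR; apply/ltP; rewrite ffact_gt0; lia.
  have Hk0 : 0 < INR k by apply: lt_0_INR; lia.
  have Hp : INR k ^ (2 * a - b) = INR k ^ a * INR k ^ (a - b).
    by rewrite -pow_add; f_equal; lia.
  have HF' : INR (F (n k - a) (d k - b)) =
    INR (F (n k) (d k)) * INR (n k ^_ a) * INR ((n k - d k) ^_ (a - b)) * INR (d k - b)
     / (INR (d k) * INR ((2 * n k - d k - 1) ^_ (2 * a - b))).
    rewrite HeqR; field; lra.
  rewrite HF' Hp; field.
  split; first lra. split; first lra. split; first lra.
  split; first by apply: pow_nonzero; lra.
  split; first by apply: pow_nonzero; lra.
  lra.
- apply: is_lim_seq_div'.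
  + apply: is_lim_seq_mult'; last exact: lim_approx (approx_subc _ _ b Hd).
    apply: is_lim_seq_mult'; first exact: ff_lim.
    exact: ff_lim.
  + apply: is_lim_seq_mult'; first exact: lim_approx.
    exact: ff_lim.
  + apply: Rmult_integral_contrapositive; split; first lra.
    apply: pow_nonzero; lra.
Qed.

Lemma Lval lam del a b : 0 < lam -> 0 < del < 1 -> (b <= a)%nat ->
  lam ^ a * (lam - del * lam) ^ (a - b) * (del * lam) /
    (del * lam * (2 * lam - del * lam) ^ (2 * a - b))
  = (1 - del) ^ (a - b) / (2 - del) ^ (2 * a - b).
Proof.
move=> Hl Hd Hba.
rewrite (_ : lam - del * lam = (1 - del) * lam); last ring.
rewrite (_ : 2 * lam - del * lam = (2 - del) * lam); last ring.
rewrite !Rpow_mult_distr.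
rewrite (_ : (2 * a - b)%nat = (a + (a - b))%nat); last by lia.
rewrite !pow_add; field.
repeat split; try (apply: pow_nonzero); lra.
Qed.

Definition Rsum (f : ptree -> R) (s : seq ptree) :=
  foldr (fun t acc => f t + acc) 0 s.

Lemma Rsum_sq (Y : ptree -> nat) D mu s :
  Rsum (fun t => (INR (Y t) * D - mu) ^ 2) s =
  D ^ 2 * INR (sumn (map (fun t => Y t * Y t)%nat s))
  - 2 * mu * D * INR (sumn (map Y s)) + mu ^ 2 * INR (size s).
Proof.
elim: s => [|t s IH]; first by rewrite /= Rmult_0_r; ring.
have -> : size (t :: s) = (size s).+1 by [].
rewrite (_ : Rsum _ (t :: s) = (INR (Y t) * D - mu) ^ 2 + Rsum (fun t => (INR (Y t) * D - mu) ^ 2) s) //.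
rewrite (_ : sumn (map Y (t :: s)) = (Y t + sumn (map Y s))%nat) //.
rewrite (_ : sumn (map (fun t => Y t * Y t)%nat (t :: s)) = (Y t * Y t + sumn (map (fun t => Y t * Y t)%nat s))%nat) //.
rewrite IH !plus_INR mult_INR S_INR; ring.
Qed.

Lemma markov (g : ptree -> R) eps s : 0 < eps ->
  INR (count (fun t => ~~ Rleb (Rabs (g t)) eps) s) * eps ^ 2
    <= Rsum (fun t => g t ^ 2) s.
Proof.
move=> He; elim: s => [|t s IH] /=; first lra.
rewrite plus_INR Rmult_plus_distr_r.
apply: Rplus_le_compat => //.
rewrite /Rleb; case: Rle_dec => H /=.
  rewrite Rmult_0_l; apply: pow2_ge_0.
rewrite Rmult_1_l.
have Hg : eps < Rabs (g t) by lra.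
have H2 := pow_incr eps (Rabs (g t)) 2 ltac:(lra).
rewrite pow2_abs /= in H2; lra.
Qed.

Theorem proposition5 (lambda delta : R) (i : nat) (T : ptree) :
  0 < lambda -> 0 < delta < 1 -> (1 <= i)%nat -> nverts T = i ->
  forall eps : R, 0 < eps ->
  exists K : nat, forall k : nat, (K <= k)%nat ->
    forall s : seq ptree, uniq s ->
    (forall t : ptree, (t \in s) =
        (nverts t == ell_of lambda k) && (root_deg t == deg_of lambda delta k)) ->
    INR (count (fun t => Rleb (Rabs (beta (deg_of lambda delta k) T t
                                     - mu_beta delta i)) eps) s)
      > (1 - eps) * INR (size s).
Proof.
move=> Hl [Hd0 Hd1] Hi HT eps Heps.
set mu := mu_beta delta i.
pose n k := (ell_of lambda k - 1)%nat.
pose d k := deg_of lambda delta k.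
have Hnell : forall k, n k = (ell_of lambda k - 1)%nat by [].
have Hdd : forall k, d k = deg_of lambda delta k by [].
have Hell : approx (ell_of lambda) lambda := approx_ceil lambda (Rlt_le _ _ Hl).
have Hn : approx n lambda := approx_subc _ _ 1 Hell.
have Hd : approx d (delta * lambda) := approx_ceil _ (Rlt_le _ _ (Rmult_lt_0_compat _ _ Hd0 Hl)).
clearbody n d.
have Hdl : 0 < delta * lambda by apply: Rmult_lt_0_compat.
have Hdl2 : delta * lambda < lambda by nra.
have L1 := ratio_lim n d lambda (delta * lambda) i 1 Hn Hd Hdl Hdl2 Hi.
rewrite Lval // in L1.
have L2 := ratio_lim n d lambda (delta * lambda) (2 * i) 2 Hn Hd Hdl Hdl2 ltac:(lia).
rewrite Lval // in L2; last lia.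
have Hmu2 : (1 - delta) ^ (2 * i - 2) / (2 - delta) ^ (2 * (2 * i) - 2) = mu ^ 2.
  rewrite /mu /mu_beta.
  rewrite (_ : (2 * i - 2)%nat = ((i - 1) * 2)%nat); last by lia.
  rewrite (_ : (2 * (2 * i) - 2)%nat = ((2 * i - 1) * 2)%nat); last by lia.
  by rewrite !pow_mult /Rdiv Rpow_mult_distr pow_inv.
rewrite Hmu2 in L2.
have [K2 HK2] := approx_large _ _ Hd Hdl 3.
have [K3 HK3] := approx_large _ _ (approx_subn _ _ _ _ Hn Hd Hdl2) ltac:(lra) (2 * i).+1.
have Ld1 : is_lim_seq (fun k => INR (d k).-1 / INR (d k)) 1.
  have := is_lim_seq_div' _ _ _ _ (lim_approx _ _ (approx_subc _ _ 1 Hd)) (lim_approx _ _ Hd)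
    ltac:(lra).
  rewrite /Rdiv Rinv_r; last lra.
  apply: is_lim_seq_ext_loc; exists (maxn 1 K2) => k Hk.
  have Hk0 : 0 < INR k by apply: lt_0_INR; lia.
  have Hd0' : 0 < INR (d k) by apply: lt_0_INR; have := HK2 k ltac:(lia); lia.
  rewrite subn1; field; lra.
have Ldi : is_lim_seq (fun k => / INR (d k)) 0.
  have := is_lim_seq_div' _ _ _ _ lim_invn (lim_approx _ _ Hd) ltac:(lra).
  rewrite /Rdiv Rmult_0_l.
  apply: is_lim_seq_ext_loc; exists (maxn 1 K2) => k Hk.
  have Hk0 : 0 < INR k by apply: lt_0_INR; lia.
  have Hd0' : 0 < INR (d k) by apply: lt_0_INR; have := HK2 k ltac:(lia); lia.
  field; lra.
pose R1 k := INR (F (n k - i) (d k).-1) / INR (F (n k) (d k)).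
pose R2 k := INR (F (n k - i - i) (d k).-2) / INR (F (n k) (d k)).
have LR1 : is_lim_seq R1 mu.
  apply: (is_lim_seq_ext _ _ _ _ L1) => k.
  by rewrite /R1 -subn1.
have LR2 : is_lim_seq R2 (mu ^ 2).
  apply: (is_lim_seq_ext _ _ _ _ L2) => k.
  have -> : (n k - 2 * i = n k - i - i)%nat by rewrite -subnDA addnn -mul2n.
  by rewrite /R2 -subn2.
pose W k := R2 k * (INR (d k).-1 / INR (d k)) + R1 k * / INR (d k) - 2 * mu * R1 k + mu ^ 2.
have LW : is_lim_seq W 0.
  have H := is_lim_seq_plus' _ _ _ _
    (is_lim_seq_minus' _ _ _ _
      (is_lim_seq_plus' _ _ _ _ (is_lim_seq_mult' _ _ _ _ LR2 Ld1)
                                (is_lim_seq_mult' _ _ _ _ LR1 Ldi))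
      (is_lim_seq_mult' _ _ _ _ (is_lim_seq_const (2 * mu)) LR1))
    (is_lim_seq_const (mu ^ 2)).
  rewrite (_ : 0 = mu ^ 2 * 1 + mu * 0 - 2 * mu * mu + mu ^ 2); last ring.
  exact: H.
have Heps3 : 0 < eps ^ 3 by apply: pow_lt.
have [K1 HK1] := proj2 (is_lim_seq_spec W 0) LW (mkposreal _ Heps3).
exists (maxn 1 (maxn K1 (maxn K2 K3))) => k Hk s Hu Hm.
have Hdk : (3 <= d k)%nat := HK2 k ltac:(lia).
have Hndk : ((2 * i).+1 <= n k - d k)%nat := HK3 k ltac:(lia).
have HW : Rabs (W k - 0) < eps ^ 3 := HK1 k ltac:(lia).
have Hellk : ell_of lambda k = (n k).+1.
  have : (1 <= n k)%nat by lia.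
  by rewrite Hnell => ?; lia.
have Hm' : forall t, (t \in s) = (nverts t == (n k).+1) && (root_deg t == d k).
  by move=> t; rewrite Hm Hellk Hdd.
have [HX HN] := transfer (X T) Hu Hm'.
have [HXX _] := transfer (fun g => X T g * X T g)%nat Hu Hm'.
rewrite S1 in HX; [ | lia | lia].
rewrite S2 in HXX; [ | lia | lia].
rewrite HT in HX HXX.
have HS : Rsum (fun t => (beta (d k) T t - mu) ^ 2) s =
  (/ INR (d k)) ^ 2 * INR (sumn (map (fun t => X T (children t) * X T (children t))%nat s))
  - 2 * mu * / INR (d k) * INR (sumn (map (fun t => X T (children t)) s))
  + mu ^ 2 * INR (size s) := Rsum_sq (fun t => X T (children t)) (/ INR (d k)) mu s.
rewrite HX HXX HN in HS.
have HM := markov (fun t => beta (d k) T t - mu) eps s Heps.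
rewrite HS in HM.
have HF : 0 < INR (F (n k) (d k)) by apply: lt_0_INR; apply/ltP; apply: F_pos; lia.
have HD : 0 < INR (d k) by apply: lt_0_INR; lia.
have HeqW : (/ INR (d k)) ^ 2 *
     INR (d k * F (n k - i) (d k).-1 + d k * ((d k).-1 * F (n k - i - i) (d k).-2))
     - 2 * mu * / INR (d k) * INR (d k * F (n k - i) (d k).-1)
     + mu ^ 2 * INR (F (n k) (d k)) = INR (F (n k) (d k)) * W k.
  rewrite /W /R1 /R2 !plus_INR !mult_INR; field; lra.
rewrite HeqW in HM.
have HWk : W k < eps ^ 3 by move: HW; rewrite Rminus_0_r => /Rabs_lt_between; lra.
set bad := count _ s in HM.
have Hbad : INR bad < INR (F (n k) (d k)) * eps.
  have : INR bad * eps ^ 2 < INR (F (n k) (d k)) * eps * eps ^ 2.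
    apply: Rle_lt_trans HM _.
    rewrite Rmult_assoc (_ : eps * eps ^ 2 = eps ^ 3); last ring.
    by apply: Rmult_lt_compat_l.
  by move/Rmult_lt_reg_r; apply; apply: pow_lt.
have Hc : (count (fun t => Rleb (Rabs (beta (d k) T t - mu)) eps) s + bad
            = F (n k) (d k))%nat.
  rewrite /bad count_predC; exact: HN.
have Hs : INR (size s) = INR (F (n k) (d k)) by rewrite -HN.
rewrite -Hdd Hs.
move/(congr1 INR): Hc; rewrite plus_INR => Hc.
lra.
Qed.
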